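(* Let $U$ and $V$ be unitary matrices of sizes $N\times N$ and $M\times M$, with no zero entries, and let $F\in\mathbb C^{N\times N}$, $G\in\mathbb C^{M\times M}$ be arbitrary. Then (a) $\mathcal C_{U\otimes V}(F\otimes G)=\mathcal C_U(F)\otimes\mathcal C_V(G)$; (b) $\mathcal D_{U\otimes V}(F\otimes G)=\mathcal D_U(F)\otimes\mathcal D_V(G)$; (c) $\mathcal I_{U\otimes V}(F\otimes G)=\mathcal I_U(F)\otimes\mathcal I_V(G)$. That is, $\mathcal C_{U\otimes V}=\mathcal C_U\otimes\mathcal C_V$, $\mathcal D_{U\otimes V}=\mathcal D_U\otimes\mathcal D_V$, $\mathcal I_{U\otimes V}=\mathcal I_U\otimes\mathcal I_V$ (tensor products of operators taken with respect to the Kronecker product on arguments and results). The same holds for Kronecker products of more than two such unitary matrices.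
   Context: $\otimes$ is the Kronecker product, $\circ$ the entrywise product. For a unitary $W$ with no zero entries, $\mathcal C_W(F)=(F\circ W)W^*$, $\mathcal D_W(F)=W(\overline F\circ W)^*$ (both invertible linear operators on square matrices of the size of $W$), and $\mathcal I_W=\mathcal C_W^{-1}\mathcal D_W$. *)

(* Defs.v *)
From mathcomp Require Import all_boot all_algebra.
From mathcomp Require Import reals.
From mathcomp Require Export complex mxtens.
Set Implicit Arguments. Unset Strict Implicit. Unset Printing Implicit Defensive.
Import GRing.Theory Num.Theory.
Local Open Scope ring_scope.

Section Defs.
Variable R : realType.
Local Notation C := (R[i]).

Definition hadamard {m n} (A B : 'M[C]_(m, n)) : 'M[C]_(m, n) :=
  \matrix_(i, j) (A i j * B i j).

Definition mxconj {m n} (A : 'M[C]_(m, n)) : 'M[C]_(m, n) := map_mx Num.conj A.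
Definition adjmx {m n} (A : 'M[C]_(m, n)) : 'M[C]_(n, m) := (mxconj A)^T.

Definition unitary {n} (W : 'M[C]_n) : Prop :=
  adjmx W *m W = 1%:M /\ W *m adjmx W = 1%:M.

Definition no_zero_entries {n} (W : 'M[C]_n) : Prop := forall i j, W i j != 0.

Definition opC {n} (W : 'M[C]_n) (F : 'M[C]_n) : 'M[C]_n :=
  hadamard F W *m adjmx W.

Definition opD {n} (W : 'M[C]_n) (F : 'M[C]_n) : 'M[C]_n :=
  W *m adjmx (hadamard (mxconj F) W).

(* I_W = C_W^{-1} D_W, where C_W^{-1} is the inverse of the linear operator
   C_W, realised as the inverse of its matrix (lin_mx) acting on vectorised
   matrices (mxvec / vec_mx). *)
Definition opCinv {n} (W : 'M[C]_n) (G : 'M[C]_n) : 'M[C]_n :=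
  vec_mx (mxvec G *m invmx (lin_mx (opC W))).

Definition opI {n} (W : 'M[C]_n) (F : 'M[C]_n) : 'M[C]_n :=
  opCinv W (opD W F).

End Defs.

(* Main.v *)
Require Import Defs.
From HB Require Import structures.
From mathcomp Require Import all_boot all_algebra.
From mathcomp Require Import reals complex mxtens.
Import GRing.Theory Num.Theory.
Local Open Scope ring_scope.

Section Aux.
Variable R : realType.
Local Notation C := (R[i]).

Definition ginv {n} (W X : 'M[C]_n) : 'M[C]_n :=
  hadamard (X *m W) (map_mx (fun x => x^-1) W).

Lemma had_tens {m n p q} (A C' : 'M[C]_(m,n)) (B D : 'M[C]_(p,q)) :
  hadamard (A *t B) (C' *t D) = hadamard A C' *t hadamard B D.
Proof. by apply/matrixP => i j; rewrite !mxE mulrACA. Qed.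

Lemma conj_tens {m n p q} (A : 'M[C]_(m,n)) (B : 'M[C]_(p,q)) :
  mxconj (A *t B) = mxconj A *t mxconj B.
Proof. by apply/matrixP => i j; rewrite !mxE rmorphM. Qed.

Lemma adj_tens {m n p q} (A : 'M[C]_(m,n)) (B : 'M[C]_(p,q)) :
  adjmx (A *t B) = adjmx A *t adjmx B.
Proof. by rewrite /adjmx conj_tens trmx_tens. Qed.

Lemma inv_tens {m n p q} (A : 'M[C]_(m,n)) (B : 'M[C]_(p,q)) :
  map_mx (fun x => x^-1) (A *t B) = map_mx (fun x => x^-1) A *t map_mx (fun x => x^-1) B.
Proof. by apply/matrixP => i j; rewrite !mxE invfM. Qed.

Lemma tens11 m n : (1%:M : 'M[C]_m) *t (1%:M : 'M[C]_n) = 1%:M.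
Proof.
apply/matrixP => i j.
case: (mxtens_indexP i) => a b; case: (mxtens_indexP j) => c d.
rewrite tensmxE !mxE (inj_eq (can_inj (@mxtens_indexK _ _))) xpair_eqE.
by rewrite -natrM mulnb.
Qed.

Lemma opC_tens {N M} (U F : 'M[C]_N) (V G : 'M[C]_M) :
  opC (U *t V) (F *t G) = opC U F *t opC V G.
Proof. by rewrite /opC had_tens adj_tens tensmx_mul. Qed.

Lemma opD_tens {N M} (U F : 'M[C]_N) (V G : 'M[C]_M) :
  opD (U *t V) (F *t G) = opD U F *t opD V G.
Proof. by rewrite /opD conj_tens had_tens adj_tens tensmx_mul. Qed.

Lemma ginv_tens {N M} (U X : 'M[C]_N) (V Y : 'M[C]_M) :
  ginv (U *t V) (X *t Y) = ginv U X *t ginv V Y.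
Proof. by rewrite /ginv tensmx_mul inv_tens had_tens. Qed.

Lemma unitary_tens {N M} (U : 'M[C]_N) (V : 'M[C]_M) :
  unitary U -> unitary V -> unitary (U *t V).
Proof.
move=> [U1 U2] [V1 V2]; split;
by rewrite adj_tens tensmx_mul ?U1 ?U2 ?V1 ?V2 tens11.
Qed.

Lemma nz_tens {N M} (U : 'M[C]_N) (V : 'M[C]_M) :
  no_zero_entries U -> no_zero_entries V -> no_zero_entries (U *t V).
Proof.
move=> hU hV i j.
case: (mxtens_indexP i) => a b; case: (mxtens_indexP j) => c d.
by rewrite tensmxE mulf_neq0.
Qed.

Section Lin.
Variable n : nat.
Variable W : 'M[C]_n.

Lemma opC_linear : linear (opC W).
Proof.
move=> a A B; rewrite /opC.
have -> : hadamard (a *: A + B) W = a *: hadamard A W + hadamard B W.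
  by apply/matrixP => i j; rewrite !mxE mulrDl mulrA.
by rewrite mulmxDl scalemxAl.
Qed.

Lemma ginv_linear : linear (ginv W).
Proof.
move=> a A B; rewrite /ginv mulmxDl -scalemxAl.
by apply/matrixP => i j; rewrite !mxE mulrDl mulrA.
Qed.

Definition opCf := opC W.
Definition ginvf := ginv W.
HB.instance Definition _ := GRing.isLinear.Build C 'M[C]_n 'M[C]_n _ opCf opC_linear.
HB.instance Definition _ := GRing.isLinear.Build C 'M[C]_n 'M[C]_n _ ginvf ginv_linear.

Hypothesis uW : unitary W.
Hypothesis nzW : no_zero_entries W.

Lemma opC_ginv X : opC W (ginv W X) = X.
Proof.
rewrite /opC /ginv.
have -> : hadamard (hadamard (X *m W) (map_mx (fun x => x^-1) W)) W = X *m W.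
  by apply/matrixP => i j; rewrite !mxE -mulrA mulVf ?mulr1.
by rewrite -mulmxA uW.2 mulmx1.
Qed.

Lemma ginv_opC X : ginv W (opC W X) = X.
Proof.
rewrite /opC /ginv -mulmxA uW.1 mulmx1.
by apply/matrixP => i j; rewrite !mxE -mulrA mulfV ?mulr1.
Qed.

Lemma opCinv_ginv X : opCinv W X = ginv W X.
Proof.
have Lunit : lin_mx opCf \in unitmx.
  suff : lin_mx opCf *m lin_mx ginvf = 1%:M by case/mulmx1_unit.
  apply/row_matrixP => i.
  rewrite row_mul rowE mul_rV_lin mul_rV_lin /= /opCf.
  rewrite mxvecK /ginvf ginv_opC vec_mxK.
  by rewrite rowE mulmx1.
rewrite /opCinv.
have -> : mxvec X = mxvec (ginv W X) *m lin_mx opCf.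
  by rewrite mul_vec_lin /= /opCf opC_ginv.
by rewrite mulmxK // mxvecK.
Qed.
End Lin.
End Aux.

Theorem lemma3p12 (R : realType) (N M : nat)
  (U : 'M[R[i]]_N) (V : 'M[R[i]]_M) (F : 'M[R[i]]_N) (G : 'M[R[i]]_M) :
  unitary U -> no_zero_entries U ->
  unitary V -> no_zero_entries V ->
  [/\ opC (U *t V) (F *t G) = opC U F *t opC V G,
      opD (U *t V) (F *t G) = opD U F *t opD V G
    & opI (U *t V) (F *t G) = opI U F *t opI V G].
Proof.
move=> uU nU uV nV; split; [exact: opC_tens | exact: opD_tens |].
rewrite /opI opD_tens !opCinv_ginv //; last 2 first.
- exact: unitary_tens. - exact: nz_tens.
exact: ginv_tens.
Qed.
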